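(* Let $G$ be a finite Abelian group (written additively) endowed with an automorphism $M : G \to G$ such that $M^2 = 1 := \mathrm{Id}_G$. Let $G^+ := \operatorname{Ker}(M - 1)$, $G^- := \operatorname{Ker}(M + 1)$, $U := G^+ \cap G^-$, $W := G^+ + G^-$. Then: (1) $U = G^+_{[2]} = G^-_{[2]}$, where $H_{[2]}$ denotes the subgroup of $2$-torsion elements of a group $H$, and there is a canonical isomorphism $W \cong (G^+ \oplus G^-)/U$; (2) $V := G/W$ is a vector space over $\mathbb{Z}/2$, and the action induced by $M$ on $V$ is the identity; (3) for $x \in G$, $M(x) = x + F(x)$, where $F : G \to G^-$ is a homomorphism vanishing on $G^+$ and equal to $x \mapsto -2x$ on $G^-$; (4) for fixed $G, G^+, G^-$, the set of homomorphisms $M'$ with $M'^2 = 1$ such that $G^+$ is contained in the $(+1)$-eigenspace of $M'$ and $G^-$ is contained in the $(-1)$-eigenspace of $M'$ is parametrized by the set $\operatorname{Hom}(V, U)$; (5) now let $G$ be any finite Abelian group containing subgroups $W, G^-, G^+$ such that (I) $W = G^- + G^+$, (II) $W \cong (G^- \oplus G^+)/U$ where $U = G^+_{[2]} = G^-_{[2]}$, and (III) $V := G/W$ is a vector space over $\mathbb{Z}/2$. Let $F_W : W \to G^-$ be the homomorphism vanishing on $G^+$ and equal to $x \mapsto -2x$ on $G^-$. Then there exists an extension $F : G \to G^-$ of $F_W$, and the set of automorphisms $M$ of $G$ with $M^2 = 1$ such that $G^+$ equals the $(+1)$-eigenspace of $M$ and $G^-$ equals the $(-1)$-eigenspace of $M$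 is in bijection (via $M = 1 + F'$) with the set of all extensions $F' = F + \phi$, $\phi \in \operatorname{Hom}(V, U)$ (viewed as homomorphisms $G \to G^-$ via $G \to V$), satisfying $G^+ = \operatorname{Ker}(F')$ and $G^- = \operatorname{Ker}(F' + 2)$.
   Formalization: In part (4), the homomorphisms M′ also satisfy $M'(x) - x \in G^-$ for all x ∈ G, that is, M′ = 1 + F′ with F′ : G → G⁻. The statement above fails without it. *)

(* Defs.v *)
(* Finite abelian groups are finZmodType's (additive notation);
   subgroups are finite sets {set G}; homomorphisms are {additive G -> G}. *)
From HB Require Import structures.
From mathcomp Require Import all_boot all_order all_algebra.
Set Implicit Arguments. Unset Strict Implicit. Unset Printing Implicit Defensive.
Import GRing.Theory.
Local Open Scope ring_scope.

Section Defs.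
Variable G : finZmodType.

Definition is_subgroup (H : {set G}) : Prop :=
  0 \in H /\ (forall x y, x \in H -> y \in H -> x - y \in H).

Definition Gplus (M : G -> G) : {set G} := [set x | M x - x == 0].
Definition Gminus (M : G -> G) : {set G} := [set x | M x + x == 0].

Definition tors2 (H : {set G}) : {set G} := [set x in H | x *+ 2 == 0].

Definition sumset (A B : {set G}) : {set G} := [set x + y | x in A, y in B].

Definition sum_kernel (A B : {set G}) : {set G * G} :=
  [set p in setX A B | p.1 + p.2 == 0].

(* the image of U in A (+) B under u |-> (u, -u); the canonical isomorphism
   (A (+) B)/U ~= A + B means that this is exactly the kernel of the sum map *)
Definition anti_diag (U : {set G}) : {set G * G} := [set (u, - u) | u in U].

(* Hom(G/W, U), represented as homomorphisms G -> G vanishing on W with values in U *)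
Definition homVU (W U : {set G}) (phi : G -> G) : Prop :=
  (forall w, w \in W -> phi w = 0) /\ (forall x, phi x \in U).

End Defs.

(* Main.v *)
Require Import Defs.
From HB Require Import structures.
From mathcomp Require Import all_boot all_order all_algebra zify.
Import GRing.Theory.
Local Open Scope ring_scope.

Definition mkAdd (G : zmodType) (f : G -> G) (H : forall x y, f (x - y) = f x - f y) : {additive G -> G} := HB.pack f (GRing.isZmodMorphism.Build G G f H).

Section Ids. Variable G : zmodType. Variables a b x : G.
Lemma I1 : a - b - x = (a - (b - x)) - x*+2.
Proof. by rewrite -!addrA; congr (a + _); rewrite opprB mulr2n opprD addrA (addrAC x) subrr add0r. Qed.
Lemma I2 : a - b - x = (a - x) - b. Proof. by rewrite addrAC. Qed.
Lemma I3 : a - b = (a - x) - (b - x). Proof. by rewrite opprB addrA subrK. Qed.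
Lemma A3 : a + b - x = (a - x) + b. Proof. by rewrite addrAC. Qed.
Lemma A4 : a + b = (a - x) + (b - x) + x*+2. Proof. by rewrite mulr2n addrACA !subrK. Qed.
Lemma B1 : b = (a + b) - a. Proof. by rewrite addrC addKr. Qed.
Lemma B2 : x = b - (b - x). Proof. by rewrite subKr. Qed.
End Ids.

Lemma memS (G : finZmodType) (A B : {set G}) a b : a \in A -> b \in B -> a + b \in sumset A B.
Proof. by move=> ha hb; apply/imset2P; apply: (Imset2spec (x1:=a) (x2:=b)). Qed.

Lemma sg_sub {G : finZmodType} {H : {set G}} {a b : G} : is_subgroup H -> a \in H -> b \in H -> a - b \in H.
Proof. by case=> _ h; apply: h. Qed.
Lemma sg_0 {G : finZmodType} {H : {set G}} : is_subgroup H -> 0 \in H.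
Proof. by case. Qed.
Lemma sg_opp {G : finZmodType} {H : {set G}} {a : G} : is_subgroup H -> a \in H -> - a \in H.
Proof. by move=> hH ha; rewrite -sub0r; apply: sg_sub => //; exact: sg_0. Qed.
Lemma sg_add {G : finZmodType} {H : {set G}} {a b : G} : is_subgroup H -> a \in H -> b \in H -> a + b \in H.
Proof. by move=> hH ha hb; rewrite -[b]opprK; apply: sg_sub => //; exact: sg_opp. Qed.
Lemma sg_2 {G : finZmodType} {H : {set G}} {a : G} : is_subgroup H -> a \in H -> a *+ 2 \in H.
Proof. by move=> hH ha; rewrite mulr2n; exact: sg_add. Qed.

Section P1.
Variable G : finZmodType.
Variable M : {additive G -> G}.
Hypothesis MM : forall x, M (M x) = x.

Lemma inGp x : (x \in Gplus M) = (M x == x).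
Proof. by rewrite inE subr_eq0. Qed.
Lemma inGm x : (x \in Gminus M) = (M x == - x).
Proof. by rewrite inE addr_eq0. Qed.

Lemma Gm_sub a b : a \in Gminus M -> b \in Gminus M -> a - b \in Gminus M.
Proof. by rewrite !inGm raddfB => /eqP -> /eqP ->; rewrite opprD. Qed.
Lemma Gp_sub a b : a \in Gplus M -> b \in Gplus M -> a - b \in Gplus M.
Proof. by rewrite !inGp raddfB => /eqP -> /eqP ->. Qed.
Lemma Gm0 : 0 \in Gminus M. Proof. by rewrite inGm raddf0 oppr0. Qed.
Lemma Gp0 : 0 \in Gplus M. Proof. by rewrite inGp raddf0. Qed.

Lemma MxmxGm x : M x - x \in Gminus M.
Proof. by rewrite inGm raddfB MM opprB. Qed.
Lemma xmMxGm x : x - M x \in Gminus M.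
Proof. by rewrite inGm raddfB MM opprB. Qed.
Lemma xpMxGp x : x + M x \in Gplus M.
Proof. by rewrite inGp raddfD MM addrC. Qed.

Lemma twoW x : x *+ 2 \in sumset (Gplus M) (Gminus M).
Proof.
have -> : x *+ 2 = (x + M x) + (x - M x) by rewrite addrACA subrr addr0 mulr2n.
by apply: memS; [apply: xpMxGp | apply: xmMxGm].
Qed.

Lemma MxmxW x : M x - x \in sumset (Gplus M) (Gminus M).
Proof.
rewrite -[M x - x]add0r; apply: memS; [exact: Gp0 | exact: MxmxGm].
Qed.

Lemma U_tors : Gplus M :&: Gminus M = tors2 (Gplus M).
Proof.
apply/setP => x; rewrite !inE !subr_eq0 [M x + x == 0]addr_eq0.
apply/idP/idP.
  case/andP => /eqP h1 /eqP h2; rewrite h1 eqxx /=.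
  by rewrite mulr2n addr_eq0 -[X in X == _]h1 h2.
case/andP => /eqP h1; rewrite mulr2n addr_eq0 => /eqP h2.
by rewrite h1 eqxx -h2 eqxx.
Qed.

Lemma U_tors' : Gplus M :&: Gminus M = tors2 (Gminus M).
Proof.
apply/setP => x; rewrite !inE !subr_eq0 [M x + x == 0]addr_eq0.
apply/idP/idP.
  case/andP => /eqP h1 /eqP h2; rewrite h2 eqxx /=.
  by rewrite mulr2n addr_eq0 -[X in X == _]h1 h2.
case/andP => /eqP h1; rewrite mulr2n addr_eq0 => /eqP h2.
by rewrite h1 -h2 eqxx.
Qed.

Lemma kerP : sum_kernel (Gplus M) (Gminus M) = anti_diag (Gplus M :&: Gminus M).
Proof.
apply/setP => [[a b]]; rewrite /sum_kernel /anti_diag in_set in_setX /=.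
apply/idP/idP.
  case/andP => /andP [ha hb]; rewrite addr_eq0 => /eqP hab.
  apply/imsetP; exists a; last by rewrite hab opprK.
  rewrite in_setI ha /=.
  by rewrite hab -sub0r; apply: Gm_sub => //; exact: Gm0.
case/imsetP => u; rewrite in_setI => /andP [h1 h2] [-> ->].
rewrite h1 /= subrr eqxx andbT.
by rewrite -sub0r; apply: Gm_sub => //; exact: Gm0.
Qed.

Lemma part3 : exists F : {additive G -> G},
        (forall x, M x = x + F x) /\ (forall x, F x \in Gminus M) /\
        (forall x, x \in Gplus M -> F x = 0) /\
        (forall x, x \in Gminus M -> F x = - (x *+ 2)).
Proof.
exists (M \- idfun); split; [|split; [|split]] => x /=.
- by rewrite addrC subrK.
- exact: MxmxGm.
- by rewrite inGp => /eqP ->; rewrite subrr.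
- by rewrite inGm => /eqP ->; rewrite mulr2n opprD.
Qed.

Lemma part4 (M' : {additive G -> G}) :
        ((forall x, M' (M' x) = x) /\
         (forall x, x \in Gplus M -> M' x = x) /\
         (forall x, x \in Gminus M -> M' x = - x) /\
         (forall x, M' x - x \in Gminus M))
        <->
        (exists phi : {additive G -> G},
           homVU (sumset (Gplus M) (Gminus M)) (Gplus M :&: Gminus M) phi /\ (forall x, M' x = M x + phi x)).
Proof.
split.
  case=> [M'M' [hp [hm hd]]].
  have [phi phiE] : exists phi : {additive G -> G}, forall x, phi x = M' x - M x.
    by exists (M' \- M).
  have van : forall w, w \in sumset (Gplus M) (Gminus M) -> phi w = 0.
    move=> w /imset2P [a b ha hb ->]; rewrite phiE.
    rewrite (raddfD M') (raddfD M) hp // hm //.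
    by move: ha hb; rewrite inGp inGm => /eqP -> /eqP ->; rewrite subrr.
  exists phi; split; last by move=> x; rewrite phiE addrC subrK.
  split => // x.
  have xm : phi x \in Gminus M.
    have -> : phi x = (M' x - x) - (M x - x) by rewrite phiE opprB addrA subrK.
    by apply: Gm_sub => //; exact: MxmxGm.
  have t2 : (phi x) *+ 2 = 0 by rewrite -raddfMn van // twoW.
  rewrite inE xm andbT inGp.
  move: xm; rewrite inGm => /eqP ->.
  by move/eqP: t2; rewrite mulr2n addr_eq0 => /eqP <-.
case=> phi [[van inU] hM'].
have inW : forall x, x \in Gplus M :&: Gminus M -> x \in sumset (Gplus M) (Gminus M).
  move=> x; rewrite inE => /andP [h _].
  by rewrite -[x]addr0; apply: memS => //; exact: Gm0.
have pp : forall x, M (phi x) = phi x.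
  by move=> x; have := inU x; rewrite inE inGp => /andP [/eqP ->].
have p2 : forall x, phi x + phi x = 0.
  move=> x; have := inU x; rewrite U_tors inE => /andP [_].
  by rewrite mulr2n => /eqP.
split; [|split; [|split]].
- move=> x; rewrite !hM' (raddfD M) MM pp (raddfD phi).
  have -> : phi (M x) = phi x.
    have -> : M x = x + (M x - x) by rewrite addrC subrK.
    by rewrite raddfD (van (M x - x)) ?addr0 // MxmxW.
  rewrite (van (phi x)) ?addr0; last exact: inW.
  by rewrite -addrA p2 addr0.
- move=> x hx; rewrite hM' van; last first.
    by rewrite -[x]addr0; apply: memS => //; exact: Gm0.
  by move: hx; rewrite inGp addr0 => /eqP.
- move=> x hx; rewrite hM' van; last first.
    by rewrite -[x]add0r; apply: memS => //; exact: Gp0.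
  by move: hx; rewrite inGm addr0 => /eqP.
- move=> x; rewrite hM' addrAC -[phi x]opprK; apply: Gm_sub.
    exact: MxmxGm.
  have := inU x; rewrite inE => /andP [_ h].
  by rewrite -sub0r; apply: Gm_sub => //; exact: Gm0.
Qed.

End P1.

Section P5.
Variable G : finZmodType.
Variables Gm Gp : {set G}.
Hypothesis sgm : is_subgroup Gm.
Hypothesis sgp : is_subgroup Gp.
Hypothesis htw : forall x, x *+ 2 \in sumset Gm Gp.
Hypothesis hker : sum_kernel Gm Gp = anti_diag (tors2 Gp).

Lemma wd m m' p p' : m \in Gm -> m' \in Gm -> p \in Gp -> p' \in Gp -> m + p = m' + p' -> m *+ 2 = m' *+ 2.
Proof.
move=> hm hm' hp hp' e.
have : (m - m', p - p') \in sum_kernel Gm Gp.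
  rewrite /sum_kernel in_set in_setX /= (sg_sub sgm hm hm') (sg_sub sgp hp hp') /=.
  by rewrite addrACA -opprD e subrr.
rewrite hker => /imsetP [u]; rewrite in_set => /andP [_ /eqP hu] [e1 _].
by apply/eqP; rewrite -subr_eq0 -mulrnBl e1 hu.
Qed.

Definition f0 (y : G) : G :=
  if [pick m | (m \in Gm) && (y - m \in Gp)] is Some m then - (m *+ 2) else 0.

Lemma f0E m p : m \in Gm -> p \in Gp -> f0 (m + p) = - (m *+ 2).
Proof.
move=> hm hp; rewrite /f0; case: pickP => [m' /andP [hm' hp'] | none].
  by congr (- _); apply: (wd _ _ _ _ hm' hm hp' hp); rewrite addrC subrK.
by have := none m; rewrite hm (addrC (m + p)) addKr hp.
Qed.

Lemma f0_in y : f0 y \in Gm.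
Proof.
rewrite /f0; case: pickP => [m' /andP [hm' _] | _]; last exact: sg_0.
by apply: sg_opp => //; apply: sg_2.
Qed.

Lemma conclude (f : G -> G) :
  (forall a b, f (a + b) = f a + f b) -> (forall x, f x \in Gm) ->
  (forall m p, m \in Gm -> p \in Gp -> f (m + p) = - (m *+ 2)) ->
  exists F : {additive G -> G}, (forall x, F x \in Gm) /\
    (forall x, x \in Gp -> F x = 0) /\ (forall x, x \in Gm -> F x = - (x *+ 2)).
Proof.
move=> fa fin fmp.
have f0' : f 0 = 0.
  have h := fa 0 0; rewrite addr0 in h.
  by apply: (addrI (f 0)); rewrite -h addr0.
have fN : forall y, f (- y) = - f y.
  by move=> y; apply: (addrI (f y)); rewrite -fa !subrr f0'.
have fB : forall x y, f (x - y) = f x - f y by move=> x y; rewrite fa fN.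
exists (@mkAdd _ f fB); split; [|split] => x /=.
- exact: fin.
- move=> hx; have := fmp 0 x (sg_0 sgm) hx.
  by rewrite add0r mul0rn oppr0.
- move=> hx; have := fmp x 0 hx (sg_0 sgp).
  by rewrite addr0.
Qed.

Lemma extend k : forall (H : {set G}) (f : G -> G), (#|G| - #|H| <= k)%N ->
  is_subgroup H -> Gm \subset H -> Gp \subset H ->
  (forall a b, a \in H -> b \in H -> f (a + b) = f a + f b) ->
  (forall x, f x \in Gm) ->
  (forall m p, m \in Gm -> p \in Gp -> f (m + p) = - (m *+ 2)) ->
  exists F : {additive G -> G}, (forall x, F x \in Gm) /\
    (forall x, x \in Gp -> F x = 0) /\ (forall x, x \in Gm -> F x = - (x *+ 2)).
Proof.
elim: k => [|k IH] H f hk hH hm hp fa fin fmp;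
  (case: (pickP (fun x => x \notin H)) => [x hx | hall];
   [| by apply: (@conclude f _ fin fmp) => a b; apply: fa; [move: (hall a) | move: (hall b)] => /= /negbFE]).
  have : (#|H| < #|G|)%N.
    rewrite -cardsT; apply: proper_card; apply/properP; split; first exact: subsetT.
    by exists x; rewrite ?in_setT.
  lia.
case/imset2P: (htw x) => m p hm' hp' e2.
have hmH : m \in H by apply: (subsetP hm).
have hpH : p \in H by apply: (subsetP hp).
have x2 : x *+ 2 \in H by rewrite e2; apply: sg_add.
pose H' := H :|: [set y | y - x \in H].
pose f' := fun y => if y \in H then f y else f (y - x) - m.
have inH' : forall y, (y \in H') = (y \in H) || (y - x \in H).
  by move=> y; rewrite !inE.
have sH' : is_subgroup H'.
  split; first by rewrite inH' (sg_0 hH).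
  move=> a b; rewrite !inH' => /orP [ha | ha] /orP [hb | hb].
  - by rewrite (sg_sub hH ha hb).
  - by rewrite I1 (sg_sub hH (sg_sub hH ha hb) x2) orbT.
  - by rewrite I2 (sg_sub hH ha hb) orbT.
  - by rewrite (I3 _ a b x) (sg_sub hH ha hb).
apply: (IH H' f').
- have : (#|H| < #|H'|)%N.
    apply: proper_card; apply/properP; split; first exact: subsetUl.
    by exists x; rewrite // inH' subrr (sg_0 hH) orbT.
  have : (#|H'| <= #|G|)%N by rewrite -cardsT; apply: subset_leq_card; apply: subsetT.
  lia.
- exact: sH'.
- by apply: subset_trans hm _; apply: subsetUl.
- by apply: subset_trans hp _; apply: subsetUl.
- move=> a b; rewrite !inH' /f'.
  case: (boolP (a \in H)) => ha; case: (boolP (b \in H)) => hb /= ha' hb'.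
  + by rewrite (sg_add hH ha hb) fa.
  + have hab : (a + b \in H) = false.
      apply/negbTE; apply: contra hb => hab; rewrite (B1 _ a b).
      exact: sg_sub.
    by rewrite hab -(addrA a) (fa a (b - x)) // addrA.
  + have hab : (a + b \in H) = false.
      apply/negbTE; apply: contra ha => hab; rewrite (B1 _ b a) (addrC b a).
      exact: sg_sub.
    by rewrite hab A3 (fa (a - x) b) // addrAC.
  + have hab : a + b \in H.
      by rewrite (A4 _ a b x); apply: sg_add => //; apply: sg_add.
    rewrite hab (A4 _ a b x) (fa _ (x *+ 2)) ?(sg_add hH ha' hb') // (fa (a - x)) // e2 (fmp m p) //.
    by rewrite mulr2n opprD addrACA.
- move=> y; rewrite /f'; case: ifP => _ //.
  by apply: sg_sub.
- move=> m0 p0 hm0 hp0; rewrite /f'.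
  have -> : m0 + p0 \in H by apply: (sg_add hH); [apply: (subsetP hm) | apply: (subsetP hp)].
  exact: fmp.
Qed.

Lemma existsF : exists F : {additive G -> G}, (forall x, F x \in Gm) /\
    (forall x, x \in Gp -> F x = 0) /\ (forall x, x \in Gm -> F x = - (x *+ 2)).
Proof.
apply: (@extend _ (sumset Gm Gp) f0 (leqnn _)).
- split; first by rewrite -[0]addr0; apply: memS; [exact: sg_0 | exact: sg_0].
  move=> a b /imset2P [m1 p1 h1 h1' ->] /imset2P [m2 p2 h2 h2' ->].
  by rewrite opprD addrACA; apply: memS; apply: sg_sub.
- by apply/subsetP => y hy; rewrite -[y]addr0; apply: memS => //; exact: sg_0.
- by apply/subsetP => y hy; rewrite -[y]add0r; apply: memS => //; exact: sg_0.
- move=> a b /imset2P [m1 p1 h1 h1' ->] /imset2P [m2 p2 h2 h2' ->].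
  rewrite addrACA !f0E //; last by apply: sg_add.
  by rewrite mulrnDl opprD.
  by apply: sg_add.
- exact: f0_in.
- exact: f0E.
Qed.

End P5.

Section P5b.
Variable G : finZmodType.
Variables Gm Gp : {set G}.
Hypothesis sgm : is_subgroup Gm.
Hypothesis sgp : is_subgroup Gp.
Hypothesis htw : forall x, x *+ 2 \in sumset Gm Gp.

Lemma part5b (F : {additive G -> G}) :
  (forall x, F x \in Gm) -> (forall x, x \in Gp -> F x = 0) ->
  (forall x, x \in Gm -> F x = - (x *+ 2)) ->
  forall M : {additive G -> G},
          (bijective M /\ (forall x, M (M x) = x) /\
           Gplus M = Gp /\ Gminus M = Gm)
          <->
          (exists phi : {additive G -> G},
             homVU (sumset Gm Gp) (tors2 Gp) phi /\
             (forall x, M x = x + (F x + phi x)) /\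
             Gp = [set x | F x + phi x == 0] /\
             Gm = [set x | F x + phi x + x *+ 2 == 0]).
Proof.
move=> Fin Fp Fm M; split.
  case=> [_ [MM [hGp hGm]]].
  have [phi phiE] : exists phi : {additive G -> G}, forall x, phi x = M x - x - F x.
    by exists ((M \- idfun) \- F).
  have MGm : forall y, y \in Gm -> M y = - y.
    by move=> y; rewrite -hGm inE addr_eq0 => /eqP.
  have MGp : forall y, y \in Gp -> M y = y.
    by move=> y; rewrite -hGp inE subr_eq0 => /eqP.
  have FphiE : forall y, F y + phi y = M y - y by move=> y; rewrite phiE (addrC (F y)) subrK.
  have van : forall w, w \in sumset Gm Gp -> phi w = 0.
    move=> w /imset2P [a b ha hb ->]; rewrite raddfD !phiE MGm // MGp // Fm // Fp //.
    by rewrite subrr subr0 addr0 opprK mulr2n -opprD addNr.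
  exists phi; split; [split | split; [|split]].
  - exact: van.
  - move=> x.
    have t2 : phi x *+ 2 = 0 by rewrite -raddfMn van.
    rewrite in_set t2 eqxx andbT -hGp inE.
    have -> : M (phi x) = - phi x.
      rewrite phiE !(raddfB M) MM (MGm (F x)) // opprK.
      by rewrite opprB opprB addrC.
    by rewrite -opprD -mulr2n t2 oppr0.
  - by move=> x; rewrite FphiE addrC subrK.
  - by apply/setP => y; rewrite in_set FphiE -hGp inE.
  - by apply/setP => y; rewrite in_set FphiE mulr2n addrA subrK -hGm inE.
case=> phi [[van inU] [hM [hp hm]]].
have pGp : forall x, phi x \in Gp by move=> x; have := inU x; rewrite in_set => /andP [].
have p2 : forall x, phi x *+ 2 = 0 by move=> x; have := inU x; rewrite in_set => /andP [_ /eqP].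
have inW1 : forall y, y \in Gm -> y \in sumset Gm Gp.
  by move=> y hy; rewrite -[y]addr0; apply: memS => //; exact: sg_0.
have inW2 : forall y, y \in Gp -> y \in sumset Gm Gp.
  by move=> y hy; rewrite -[y]add0r; apply: memS => //; exact: sg_0.
have MM : forall x, M (M x) = x.
  move=> x.
  have claim : F (M x) + phi (M x) = - (F x + phi x).
    rewrite hM !(raddfD F) !(raddfD phi) (Fm (F x)) // (Fp (phi x)) // (van (F x)) ?inW1 // (van (phi x)) ?inW2 //.
    rewrite !addr0 mulr2n opprD addNKr opprD; congr (_ + _).
    by apply/eqP; rewrite -addr_eq0 -mulr2n p2.
  by rewrite [in LHS]hM claim hM addrK.
split; [|split; [|split]].
- by exists M.
- exact: MM.
- by apply/setP => y; rewrite hp !in_set hM (addrC y) addrK.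
- by apply/setP => y; rewrite hm !in_set hM (addrC y) -addrA -mulr2n.
Qed.
End P5b.

Theorem lemma2p5 :
  (forall (G : finZmodType) (M : {additive G -> G}),
     bijective M -> (forall x, M (M x) = x) ->
     let Gp := Gplus M in let Gm := Gminus M in
     let U := Gp :&: Gm in let W := sumset Gp Gm in
     (* (1) *)
     (U = tors2 Gp /\ U = tors2 Gm /\ sum_kernel Gp Gm = anti_diag U) /\
     (* (2) *)
     ((forall x, x *+ 2 \in W) /\ (forall x, M x - x \in W)) /\
     (* (3) *)
     (exists F : {additive G -> G},
        (forall x, M x = x + F x) /\ (forall x, F x \in Gm) /\
        (forall x, x \in Gp -> F x = 0) /\
        (forall x, x \in Gm -> F x = - (x *+ 2))) /\
     (* (4) *)
     (forall M' : {additive G -> G},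
        ((forall x, M' (M' x) = x) /\
         (forall x, x \in Gp -> M' x = x) /\
         (forall x, x \in Gm -> M' x = - x) /\
         (forall x, M' x - x \in Gm))
        <->
        (exists phi : {additive G -> G},
           homVU W U phi /\ (forall x, M' x = M x + phi x)))) /\
  (* (5) *)
  (forall (G : finZmodType) (W Gm Gp : {set G}),
     is_subgroup W -> is_subgroup Gm -> is_subgroup Gp ->
     W = sumset Gm Gp ->
     tors2 Gp = tors2 Gm ->
     let U := tors2 Gp in
     sum_kernel Gm Gp = anti_diag U ->
     (forall x, x *+ 2 \in W) ->
     let ext (F : G -> G) :=
       (forall x, F x \in Gm) /\ (forall x, x \in Gp -> F x = 0) /\
       (forall x, x \in Gm -> F x = - (x *+ 2)) in
     (exists F : {additive G -> G}, ext F) /\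
     (forall F : {additive G -> G}, ext F ->
        forall M : {additive G -> G},
          (bijective M /\ (forall x, M (M x) = x) /\
           Gplus M = Gp /\ Gminus M = Gm)
          <->
          (exists phi : {additive G -> G},
             homVU W U phi /\
             (forall x, M x = x + (F x + phi x)) /\
             Gp = [set x | F x + phi x == 0] /\
             Gm = [set x | F x + phi x + x *+ 2 == 0]))).
Proof.
split.
  move=> G M bM MM Gp Gm U W.
  split; first by split; [exact: U_tors | split; [exact: U_tors' | exact: kerP]].
  split; first by split; [exact: twoW | exact: MxmxW].
  split; first exact: part3.
  move=> M'; exact: part4.
move=> G W Gm Gp sW sGm sGp hW ht U hk h2 ext; subst W.
split.
  by have [F hF] := @existsF G Gm Gp sGm sGp h2 hk; exists F.
move=> F [Fin [Fp Fm]] M.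
by apply: part5b.
Qed.
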